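(* Let $A$ be an $m\times m$ coloring matrix, let $m'\ge1$, and let $A'$ be the $(m+m')\times(m+m')$ block matrix $$A'=\left[\begin{array}{c|c}A&0\\\hline \mathbf{1}&I\end{array}\right],$$ where $\mathbf{1}$ is the $m'\times m$ all-ones matrix, $I$ is the $m'\times m'$ identity matrix and the upper right block is zero. Then $$\frac{1}{m'}F_{A'}(x)^2+\left(\frac{m'-2}{m'}F_A(x)-1\right)F_{A'}(x)+\left(F_A(x)-\frac{m'-1}{m'}F_A(x)^2+m'x\right)=0,$$ and consequently $$F_{A'}(x)=\frac{m'-(m'-2)F_A(x)}{2}-\frac{\sqrt{(m'-(m'-2)F_A(x))^2-4(m'F_A(x)-(m'-1)F_A(x)^2+(m')^2x)}}{2}.$$
   Context: A plane tree is an unlabeled rooted tree in which the children of every vertex are linearly ordered. A coloring matrix is a square matrix $A=(a_{ij})$ with entries in $\{0,1\}$. An $A$-coloring of a plane tree assigns to each vertex a color (an index of a row of $A$) such that whenever a vertex of color $j$ is a child of a vertex of color $i$, $a_{ij}=1$. Let $t_A(n)$ be the number of pairs (plane tree with $n$ vertices, $A$-coloring of it), and $F_A(x)=\sum_{n\ge1}t_A(n)x^n$ (formal power series). *)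

(* Defs.v *)
From HB Require Import structures.
From mathcomp Require Import all_boot all_order all_algebra.
Set Implicit Arguments. Unset Strict Implicit. Unset Printing Implicit Defensive.
Import Order.TTheory GRing.Theory Num.Theory.

(* A pair (plane tree, coloring of it) is encoded as a plane tree whose
   vertices carry a color (a natural number, meant to index a row of A).
   The children of a vertex are given by an ordered list. *)
Inductive ctree : Type := CNode of nat & seq ctree.

Fixpoint ctree_enc (t : ctree) : GenTree.tree nat :=
  let: CNode i s := t in GenTree.Node i (map ctree_enc s).

Fixpoint ctree_dec (t : GenTree.tree nat) : ctree :=
  match t with
  | GenTree.Leaf _ => CNode 0 [::]
  | GenTree.Node i s => CNode i (map ctree_dec s)
  end.

Fixpoint ctree_encK_aux (t : ctree) : ctree_dec (ctree_enc t) = t :=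
  match t return ctree_dec (ctree_enc t) = t with
  | CNode i s => f_equal (CNode i)
      ((fix aux (s' : seq ctree) : map ctree_dec (map ctree_enc s') = s' :=
          match s' return map ctree_dec (map ctree_enc s') = s' with
          | [::] => erefl
          | t' :: s'' => f_equal2 cons (ctree_encK_aux t') (aux s'')
          end) s)
  end.

Lemma ctree_encK : cancel ctree_enc ctree_dec.
Proof. exact: ctree_encK_aux. Qed.

HB.instance Definition _ := Countable.copy ctree (can_type ctree_encK).

Fixpoint csize (t : ctree) : nat :=
  let: CNode _ s := t in (sumn (map csize s)).+1.

Definition color (t : ctree) : nat := let: CNode i _ := t in i.

(* entry a_{ij} of a square matrix, indices given as naturals (0 if out of range) *)
Definition entry (m : nat) (A : 'M[nat]_m) (i j : nat) : nat :=
  match @insub nat (fun k => k < m) 'I_m i, @insub nat (fun k => k < m) 'I_m j with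
  | Some i', Some j' => A i' j'
  | _, _ => 0%N
  end.

Fixpoint acolored (m : nat) (A : 'M[nat]_m) (t : ctree) : bool :=
  let: CNode i s := t in
  [&& i < m, all (fun c => entry A i (color c) == 1%N) s & all (acolored A) s].

Definition coloring_matrix (m : nat) (A : 'M[nat]_m) : Prop :=
  forall i j, A i j = 0%N \/ A i j = 1%N.

Definition counts (P : ctree -> Prop) (k : nat) : Prop :=
  exists s : seq ctree, [/\ uniq s, (forall c, c \in s <-> P c) & size s = k].

Definition tA_is (m : nat) (A : 'M[nat]_m) (n k : nat) : Prop :=
  counts (fun c => acolored A c /\ csize c = n) k.

Definition ps := nat -> rat.
Local Open Scope ring_scope.
Definition psC (c : rat) : ps := fun n => if n is 0%N then c else 0.
Definition psX : ps := fun n => if n == 1%N then 1 else 0.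
Definition psadd (f g : ps) : ps := fun n => f n + g n.
Definition psscale (c : rat) (f : ps) : ps := fun n => c * f n.
Definition psmul (f g : ps) : ps := fun n => \sum_(i < n.+1) f i * g (n - i)%N.

Definition genfun (t : nat -> nat) : ps := fun n => if n is 0%N then 0 else (t n)%:R.

Definition extmx (m m' : nat) (A : 'M[nat]_m) : 'M[nat]_(m + m') :=
  block_mx A 0 (const_mx 1%N) 1%:M.

(* Main.v *)
Require Import Defs.
From mathcomp Require Import all_boot all_order all_algebra.
From mathcomp Require Import zify ring lra.
Set Implicit Arguments. Unset Strict Implicit.

Definition cnt (T : eqType) (P : T -> Prop) (k : nat) : Prop :=
  exists s : seq T, [/\ uniq s, (forall c, c \in s <-> P c) & size s = k].
Arguments cnt {T}.

Lemma cnt_uniq (T : eqType) (P : T -> Prop) a b : cnt P a -> cnt P b -> a = b.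
Proof.
move=> [s1 [u1 m1 <-]] [s2 [u2 m2 <-]].
have e : s1 =i s2 by move=> x; apply/idP/idP => H; [apply/m2; apply/m1 | apply/m1; apply/m2].
by have := uniq_size_uniq u1 e; rewrite u2 => /esym/eqP.
Qed.

Lemma cnt_ext (T : eqType) (P Q : T -> Prop) a :
  (forall x, P x <-> Q x) -> cnt P a -> cnt Q a.
Proof. by move=> e [s [u m z]]; exists s; split => // x; split => [/m/e|/e/m]. Qed.

Lemma cnt0 (T : eqType) (P : T -> Prop) : (forall x, ~ P x) -> cnt P 0.
Proof. by move=> H; exists [::]; split => // x; split => // /H. Qed.

Lemma cnt1 (T : eqType) (y : T) : cnt (fun x => x = y) 1.
Proof. by exists [:: y]; split => // x; rewrite inE; split => [/eqP|->]. Qed.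

Lemma cnt_union (T : eqType) (P Q : T -> Prop) a b :
  cnt P a -> cnt Q b -> (forall x, P x -> Q x -> False) ->
  cnt (fun x => P x \/ Q x) (a + b).
Proof.
move=> [s1 [u1 m1 <-]] [s2 [u2 m2 <-]] D; exists (s1 ++ s2); split.
- rewrite cat_uniq u1 u2 /= andbT; apply/hasPn => x /m2 Qx; apply/negP => /m1 Px.
  exact: D Px Qx.
- by move=> x; rewrite mem_cat; split => [/orP [/m1|/m2]|[/m1|/m2] ->]; rewrite ?orbT; auto.
- by rewrite size_cat.
Qed.

Lemma cnt_big (T : eqType) N (P : nat -> T -> Prop) (k : nat -> nat) :
  (forall i, i < N -> cnt (P i) (k i)) ->
  (forall i j x, i < N -> j < N -> P i x -> P j x -> i = j) ->
  cnt (fun x => exists2 i, i < N & P i x) (\sum_(i < N) k i).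
Proof.
elim: N => [|N IH] C D.
  by rewrite big_ord0; apply: cnt0 => x [].
rewrite big_ord_recr /=.
apply: (@cnt_ext _ (fun x => (exists2 i, i < N & P i x) \/ P N x)).
  move=> x; split => [[[i iN Pi]|PN]|[i]]; first by exists i => //; apply: ltnW.
    by exists N.
  by rewrite ltnS leq_eqVlt => /orP [/eqP ->|iN Pi]; [right|left; exists i].
apply: cnt_union.
- apply: IH => [i iN|i j x iN jN]; first by apply: C; apply: ltnW.
  by apply: D; apply: ltnW.
- exact: C.
- move=> x [i iN Pi] PN; have := D i N x (ltnW iN) (ltnSn _) Pi PN.
  by move=> e; rewrite e ltnn in iN.
Qed.

Lemma cnt_img2 (T U V : eqType) (P : T -> Prop) (Q : U -> Prop) (f : T -> U -> V) a b :
  cnt P a -> cnt Q b ->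
  (forall x y x' y', P x -> Q y -> P x' -> Q y' -> f x y = f x' y' -> x = x' /\ y = y') ->
  cnt (fun z => exists x y, [/\ P x, Q y & z = f x y]) (a * b).
Proof.
move=> [s1 [u1 m1 <-]] [s2 [u2 m2 <-]] I; exists [seq f x y | x <- s1, y <- s2]; split.
- apply: allpairs_uniq => // [[x y]] [x' y'] /allpairsP [[p1 p2] /= [/m1 h1 /m2 h2 [-> ->]]]
    /allpairsP [[q1 q2] /= [/m1 g1 /m2 g2 [-> ->]]] /= E.
  by case: (I _ _ _ _ h1 h2 g1 g2 E) => -> ->.
- move=> z; split.
    by move=> /allpairsP [[x y] /= [/m1 h1 /m2 h2 ->]]; exists x, y.
  by move=> [x [y [/m1 h1 /m2 h2 ->]]]; apply/allpairsP; exists (x, y).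
- by rewrite size_allpairs.
Qed.

Lemma entry_outj n (B : 'M[nat]_n) i j : n <= j -> entry B i j = 0.
Proof.
move=> h; rewrite /entry; case: (insub i) => // a.
by rewrite insubF // ltnNge h.
Qed.

Lemma entry_in n (B : 'M[nat]_n) i j (Hi : i < n) (Hj : j < n) :
  entry B i j = B (Ordinal Hi) (Ordinal Hj).
Proof.
rewrite /entry (insubT (fun k => k < n) Hi) (insubT (fun k => k < n) Hj) /=.
by congr (B _ _); apply: val_inj.
Qed.

Lemma entry_ext_old m m' (A : 'M[nat]_m) i j :
  i < m -> entry (extmx m' A) i j = entry A i j.
Proof.
move=> him.
have hi' : i < m + m' by apply: leq_trans him (leq_addr _ _).
case: (ltnP j m) => hjm.
  have hj' : j < m + m' by apply: leq_trans hjm (leq_addr _ _).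
  rewrite (entry_in (extmx m' A) hi' hj') (entry_in A him hjm) /extmx.
  have -> : Ordinal hi' = lshift m' (Ordinal him) by apply: val_inj.
  have -> : Ordinal hj' = lshift m' (Ordinal hjm) by apply: val_inj.
  by rewrite block_mxEul.
rewrite (entry_outj A i hjm).
case: (ltnP j (m + m')) => hj'; last by rewrite entry_outj.
have hjm' : j - m < m' by rewrite ltn_subLR.
rewrite (entry_in (extmx m' A) hi' hj') /extmx.
have -> : Ordinal hi' = lshift m' (Ordinal him) by apply: val_inj.
have -> : Ordinal hj' = rshift m (Ordinal hjm') by apply: val_inj => /=; rewrite subnKC.
by rewrite block_mxEur mxE.
Qed.

Lemma entry_ext_new m m' (A : 'M[nat]_m) i j :
  m <= i < m + m' -> (entry (extmx m' A) i j == 1) = (j < m) || (j == i).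
Proof.
move=> /andP [hmi hi'].
have him' : i - m < m' by rewrite ltn_subLR.
case: (ltnP j (m + m')) => hj'; last first.
  rewrite entry_outj //=; apply/esym/negbTE; rewrite negb_or -!leqNgt.
  rewrite (leq_trans (leq_addr _ _) hj') /=.
  by apply/eqP => e; move: hi'; rewrite -e ltnNge hj'.
rewrite (entry_in (extmx m' A) hi' hj') /extmx.
have -> : Ordinal hi' = rshift m (Ordinal him') by apply: val_inj => /=; rewrite subnKC.
case: (ltnP j m) => hjm.
  have -> : Ordinal hj' = lshift m' (Ordinal hjm) by apply: val_inj.
  by rewrite block_mxEdl mxE.
have hjm' : j - m < m' by rewrite ltn_subLR.
have -> : Ordinal hj' = rshift m (Ordinal hjm') by apply: val_inj => /=; rewrite subnKC.
rewrite block_mxEdr mxE /=.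
have -> : (Ordinal him' == Ordinal hjm') = (j == i).
  apply/eqP/eqP => [[] e|e]; last by apply: val_inj => /=; rewrite e.
  by rewrite -(subnKC hmi) -(subnKC hjm) e.
by case: (j == i).
Qed.

Lemma mem_csize c s : c \in s -> csize c <= sumn (map csize s).
Proof.
elim: s => [|d s IH] //=; rewrite in_cons => /orP [/eqP ->|/IH h].
  exact: leq_addr.
exact: leq_trans h (leq_addl _ _).
Qed.

Lemma ctree_sind (P : ctree -> Prop) :
  (forall i s, (forall c, c \in s -> P c) -> P (CNode i s)) -> forall t, P t.
Proof.
move=> H t; suff: forall n t, csize t <= n -> P t by apply; apply: leqnn.
elim=> [|n IH] [i s] //= hs; apply: H => c cs; apply: IH.
exact: leq_trans (mem_csize cs) hs.
Qed.

Lemma all_cond (T : eqType) (p q q' : pred T) (s : seq T) :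
  (forall x, x \in s -> p x -> q x = q' x) -> all p s && all q s = all p s && all q' s.
Proof.
move=> H; case Hp: (all p s) => //=; apply: eq_in_all => x xs.
exact: H x xs (allP Hp x xs).
Qed.

Lemma entry1_lt m (A : 'M[nat]_m) i j : entry A i j == 1 -> j < m.
Proof. by case: (ltnP j m) => // h; rewrite entry_outj. Qed.

Lemma acolA_color m (A : 'M[nat]_m) u : acolored A u -> color u < m.
Proof. by case: u => i s /= /and3P []. Qed.

Lemma acol_old m m' (A : 'M[nat]_m) u :
  color u < m -> acolored (extmx m' A) u = acolored A u.
Proof.
elim/ctree_sind: u => i s IH /= him.
rewrite him (leq_trans him (leq_addr _ _)) /=.
rewrite (eq_all (a2 := fun c => entry A i (color c) == 1)); last first.
  by move=> c /=; rewrite entry_ext_old.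
apply: all_cond => c cs /entry1_lt h; exact: IH.
Qed.

Lemma acol_new m m' (A : 'M[nat]_m) c s : m <= c < m + m' ->
  acolored (extmx m' A) (CNode c s) =
  all (fun u => (color u < m) || (color u == c)) s && all (acolored (extmx m' A)) s.
Proof.
move=> hc /=; case/andP: (hc) => _ ->; rewrite /=.
by congr andb; apply: eq_all => u; rewrite entry_ext_new.
Qed.

Definition children (u : ctree) := let: CNode _ s := u in s.
Definition join (x u : ctree) := CNode (color x) (rcons (children x) u).

Lemma join_inj x u x' u' : join x u = join x' u' -> x = x' /\ u = u'.
Proof. by case: x => i s; case: x' => i' s' [-> /rcons_inj [-> ->]]. Qed.

Lemma csize_join x u : csize (join x u) = csize x + csize u.
Proof. by case: x => i s /=; rewrite map_rcons sumn_rcons addSn. Qed.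

Fixpoint hf (t : nat -> nat) (f n : nat) : nat :=
  if f is f'.+1 then
    (n == 1) + \sum_(i < n.-1) hf t f' i.+1 * (t (n - i.+1) + hf t f' (n - i.+1))
  else 0.

Definition h t n := hf t n n.
Arguments h : simpl never.

Lemma hf_S t f n : hf t f.+1 n =
  (n == 1) + \sum_(i < n.-1) hf t f i.+1 * (t (n - i.+1) + hf t f (n - i.+1)).
Proof. by []. Qed.

Lemma hf_step t f n : n <= f -> hf t f.+1 n = hf t f n.
Proof.
elim: f n => [|f IH] n hn.
  by move: hn; rewrite leqn0 => /eqP ->; rewrite /= big_ord0.
rewrite hf_S [RHS]hf_S; congr (_ + _); apply: eq_bigr => i _.
have hi : i.+1 <= f.
  by have := ltn_ord i; move: (nat_of_ord i) => k; case: n hn {i} => //= n; lia.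
have hni : n - i.+1 <= f.
  by lia.
by rewrite !IH.
Qed.

Lemma hf_stable t f n : n <= f -> hf t f n = h t n.
Proof.
move=> hn; rewrite /h; elim: f hn => [|f IH]; first by rewrite leqn0 => /eqP ->.
rewrite leq_eqVlt => /orP [/eqP -> //|]; rewrite ltnS => hn.
by rewrite hf_step // IH.
Qed.

Lemma h_rec t n :
  h t n = (n == 1) + \sum_(i < n.-1) h t i.+1 * (t (n - i.+1) + h t (n - i.+1)).
Proof.
case: n => [|n]; first by rewrite /h /= big_ord0.
rewrite {1}/h hf_S; congr (_ + _); apply: eq_bigr => i _.
rewrite !hf_stable //; first by rewrite subSS leq_subr.
Qed.

Definition TT m (A : 'M[nat]_m) n u := acolored A u /\ csize u = n.
Definition Rc m m' (A : 'M[nat]_m) c n u :=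
  [/\ acolored (extmx m' A) u, color u = c & csize u = n].

Lemma TT_Rc_disj m m' (A : 'M[nat]_m) c n k u :
  m <= c -> TT A n u -> Rc m' A c k u -> False.
Proof.
move=> hc [/acolA_color h _] [_ e _]; move: h; rewrite e ltnNge hc //.
Qed.

Lemma count_R m m' (A : 'M[nat]_m) t :
  (forall n, cnt (TT A n) (t n)) ->
  forall n c, m <= c < m + m' -> cnt (Rc m' A c n) (h t n).
Proof.
move=> Ht; elim/ltn_ind => n IH c hc.
case: n IH => [|[|n]] IH.
- rewrite /h /=; apply: cnt0 => u [_ _]; by case: u.
- rewrite h_rec /= big_ord0.
  apply: cnt_ext (cnt1 (CNode c [::])) => u; split.
    by move=> ->; split => //; rewrite acol_new.
  case: u => i [|d s] [ac /= -> sz] //.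
  by move: sz => [] /eqP; rewrite addn_eq0 => /andP []; case: d {ac}.
rewrite h_rec /= add0n.
pose Q k y := TT A k y \/ Rc m' A c k y.
have HQ : forall k, k < n.+2 -> cnt (Q k) (t k + h t k).
  move=> k hk; apply: cnt_union; [exact: Ht|exact: IH|].
  by move=> x; apply: TT_Rc_disj; case/andP: hc.
pose P i u := exists x y, [/\ Rc m' A c i.+1 x, Q (n.+2 - i.+1) y & u = join x y].
have Hk : forall i, i < n.+1 -> cnt (P i) (h t i.+1 * (t (n.+2 - i.+1) + h t (n.+2 - i.+1))).
  move=> i hi; apply: cnt_img2; [apply: IH => //; lia | apply: HQ; lia |].
  by move=> x y x' y' _ _ _ _ /join_inj.
have Hd : forall i j u, i < n.+1 -> j < n.+1 -> P i u -> P j u -> i = j.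
  move=> i j u _ _ [x [y [[_ _ sx] _ ->]]] [x' [y' [[_ _ sx'] _ /join_inj [ex _]]]].
  by move: sx sx'; rewrite ex => -> [].
apply: cnt_ext (cnt_big Hk Hd) => u; split.
- move=> [i hi [x [y [[acx cx sx] Qy ->]]]].
  have ac' : acolored (extmx m' A) y /\ ((color y < m) || (color y == c)).
    case: Qy => [[ay _]|[ay -> _]]; last by rewrite eqxx orbT.
    by have hy := acolA_color ay; rewrite hy acol_old.
  split.
  + case: x acx cx {sx} => i0 s acx /= cx; subst i0.
    change (acolored (extmx m' A) (CNode c (rcons s y))).
    move: acx; rewrite !acol_new // !all_rcons.
    by case: ac' => -> -> /andP [-> ->].
  + by case: x cx {acx sx}.
  + rewrite csize_join sx; case: Qy => [[_ ->]|[_ _ ->]]; lia.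
- case: u => c0 s [acu /= ec su]; subst c0.
  case/lastP: s acu su => [|s v] acu su; first by [].
  move: su; rewrite map_rcons sumn_rcons => [[su]].
  have hv : 0 < csize v by case: v {acu su}.
  exists (sumn (map csize s)); first by lia.
  exists (CNode c s), v; move: acu; rewrite !acol_new // !all_rcons => /andP [/andP [cv cs] /andP [av ast]].
  split => //.
  + by split => //; rewrite acol_new // cs ast.
  + case/orP: cv => [cv|/eqP cv].
      by left; split; [rewrite -(acol_old m' A cv) | lia].
    by right; split => //; lia.
Qed.

Lemma count_T' m m' (A : 'M[nat]_m) t :
  (forall n, cnt (TT A n) (t n)) ->
  forall n, cnt (TT (extmx m' A) n) (t n + m' * h t n).
Proof.
move=> Ht n.
have H1 := @cnt_big _ m' (fun a => Rc m' A (m + a) n) (fun _ => h t n).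
have {H1} H1 := H1 (fun a ha => @count_R _ m' _ _ Ht n (m + a) ltac:(lia)).
have D : forall i j u, i < m' -> j < m' -> Rc m' A (m + i) n u -> Rc m' A (m + j) n u -> i = j.
  by move=> i j u _ _ [_ e1 _] [_ e2 _]; move: e2; rewrite e1 => /eqP; rewrite eqn_add2l => /eqP.
have {H1} H1 := H1 D.
have H2 := cnt_union (Ht n) H1
  (fun u h1 h2 => ltac:(case: h2 => a _ h2; exact: TT_Rc_disj (leq_addr a m) h1 h2)).
rewrite sum_nat_const card_ord in H2; apply: cnt_ext H2 => u; split.
- case=> [[ac sz]|[a ha [ac e sz]]]; last by [].
  by split => //; rewrite acol_old // (acolA_color ac).
- case=> ac sz; case: (ltnP (color u) m) => hc.
    by left; split => //; rewrite -(acol_old m' A hc).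
  right; exists (color u - m); last by split => //; rewrite subnKC.
  have := acolA_color ac; lia.
Qed.

Import GRing.Theory Num.Theory.
Local Open Scope ring_scope.

Definition tr (n : nat) (f : ps) : {poly rat} := \poly_(i < n.+1) f i.

Lemma psmul_tr f g n : psmul f g n = (tr n f * tr n g)`_n.
Proof.
rewrite coefM /psmul; apply: eq_bigr => i _.
rewrite !coef_poly ltn_ord; case: ifP => //; rewrite ltnS leq_subr //.
Qed.

Lemma psmulC f g n : psmul f g n = psmul g f n.
Proof. by rewrite !psmul_tr mulrC. Qed.

Lemma psmul_ext f f' g g' n : (forall i, f i = f' i) -> (forall i, g i = g' i) ->
  psmul f g n = psmul f' g' n.
Proof. by move=> ef eg; apply: eq_bigr => i _; rewrite ef eg. Qed.

Lemma psmulDl f g h n : psmul (psadd f g) h n = psmul f h n + psmul g h n.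
Proof. by rewrite /psmul -big_split; apply: eq_bigr => i _; rewrite /psadd mulrDl. Qed.

Lemma psmulZl c f g n : psmul (psscale c f) g n = c * psmul f g n.
Proof. by rewrite /psmul mulr_sumr; apply: eq_bigr => i _; rewrite /psscale mulrA. Qed.

Lemma psmulCl c g n : psmul (psC c) g n = c * g n.
Proof.
rewrite /psmul big_ord_recl /= subn0 big1 ?addr0 // => i _.
by rewrite /psC /= mul0r.
Qed.

Lemma psmulDr f g h n : psmul h (psadd f g) n = psmul h f n + psmul h g n.
Proof. by rewrite psmulC psmulDl !(psmulC h). Qed.

Lemma psmulZr c f g n : psmul g (psscale c f) n = c * psmul g f n.
Proof. by rewrite psmulC psmulZl psmulC. Qed.

Lemma psmulCr c g n : psmul g (psC c) n = c * g n.
Proof. by rewrite psmulC psmulCl. Qed.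

Lemma ps_sqrt_uniq (S U : ps) : S 0%N = U 0%N -> S 0%N != 0 ->
  (forall n, psmul S S n = psmul U U n) -> forall n, S n = U n.
Proof.
move=> e0 nz E; elim/ltn_ind => n IH.
case: n IH => [|n] IH; first by [].
have := E n.+1; rewrite /psmul big_ord_recl big_ord_recr /= subn0 subnn.
rewrite [in RHS]big_ord_recl [in RHS]big_ord_recr /= subn0 subnn.
have -> : \sum_(i < n) S (bump 0 (widen_ord (leqnSn n) i)) * S (n.+1 - bump 0 (widen_ord (leqnSn n) i))%N
  = \sum_(i < n) U (bump 0 (widen_ord (leqnSn n) i)) * U (n.+1 - bump 0 (widen_ord (leqnSn n) i))%N.
  apply: eq_bigr => i _; rewrite /bump /= !add1n !IH //.
    by rewrite subSS; have := ltn_ord i; lia.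
  by have := ltn_ord i; lia.
rewrite /bump /= add1n -e0 => /eqP.
set M := \sum_(i < n) _ => /eqP H.
have H2 : (S n.+1 - U n.+1) * (2 * S 0%N) =
  (S 0%N * S n.+1 + (M + S n.+1 * S 0%N)) - (S 0%N * U n.+1 + (M + U n.+1 * S 0%N)) by ring.
move: H2; rewrite H subrr => /eqP; rewrite mulf_eq0 mulf_eq0 (negbTE nz) orbF subr_eq0.
by case/orP => /eqP.
Qed.

Lemma genfunS t j : genfun t j.+1 = (t j.+1)%:R.
Proof. by []. Qed.

Lemma G_rec t (n : nat) :
  let F := genfun t in let G : ps := fun n => (h t n)%:R in
  G n = psX n + psmul G (psadd F G) n.
Proof.
move=> F G.
case: n => [|n].
  by rewrite /G /psX /psmul big_ord1 /= /h /= mul0r addr0.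
rewrite /G h_rec /= natrD natr_sum /psmul big_ord_recl /=.
have -> : h t 0 = 0%N by [].
rewrite mul0r add0r.
rewrite big_ord_recr /= subnn /psadd /F /= addr0 mulr0 addr0.
congr (_ + _); first by rewrite /psX; case: (n.+1 == 1%N).
apply: eq_bigr => i _; rewrite /bump /= add1n subSS natrM natrD.
have -> : (n - i)%N = (n - i).-1.+1 by have := ltn_ord i; lia.
by rewrite genfunS.
Qed.

Lemma psaddE f g n : psadd f g n = f n + g n. Proof. by []. Qed.
Lemma psscaleE c f n : psscale c f n = c * f n. Proof. by []. Qed.

Unset Implicit Arguments.

Theorem theorem27 (m m' : nat) (A : 'M[nat]_m) (t t' : nat -> nat) :
  coloring_matrix A ->
  (1 <= m')%N ->
  (forall n, tA_is A n (t n)) ->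
  (forall n, tA_is (extmx m' A) n (t' n)) ->
  let F := genfun t in
  let F' := genfun t' in
  let k : rat := m'%:R in
  (* (1/m') F'^2 + ((m'-2)/m' F - 1) F' + (F - (m'-1)/m' F^2 + m' x) = 0 *)
  (forall n,
     psadd (psadd (psscale (1 / k) (psmul F' F'))
                  (psmul (psadd (psscale ((k - 2) / k) F) (psC (-1))) F'))
           (psadd (psadd F (psscale (- ((k - 1) / k)) (psmul F F))) (psscale k psX))
       n = 0)
  /\
  (* F' = (m' - (m'-2)F)/2 - sqrt(D)/2, where sqrt(D) is the power series square
     root of D = (m' - (m'-2)F)^2 - 4(m'F - (m'-1)F^2 + m'^2 x) with constant term
     sqrt(m'^2) = m' *)
  (let G := psadd (psC k) (psscale (- (k - 2)) F) in
   let D := psadd (psmul G G)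
              (psscale (-4) (psadd (psadd (psscale k F) (psscale (- (k - 1)) (psmul F F)))
                                   (psscale (k ^+ 2) psX))) in
   forall S : ps, S 0%N = k -> (forall n, psmul S S n = D n) ->
   forall n, F' n = psadd (psscale (1 / 2) G) (psscale (- (1 / 2)) S) n).
Proof.
move=> _ hm Ht Ht' F F' k.
have Ht0 : forall n, cnt (TT A n) (t n) := Ht.
have Et' : forall n, t' n = (t n + m' * h t n)%N.
  by move=> n; apply: cnt_uniq (Ht' n) (count_T' m' Ht0 n).
pose Gs : ps := fun n => (h t n)%:R.
have EF' : forall i, F' i = psadd F (psscale k Gs) i.
  case=> [|i]; first by rewrite /F' /F /psadd /psscale /= add0r /Gs /h /= mulr0.
  by rewrite /F' /F /psadd /psscale !genfunS Et' natrD natrM.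
have Rec : forall n, Gs n = psX n + psmul Gs F n + psmul Gs Gs n.
  by move=> n; rewrite [LHS]G_rec psmulDr addrA.
have kn0 : k != 0 by rewrite /k pnatr_eq0 -lt0n.
have E1 : forall n,
     psadd (psadd (psscale (1 / k) (psmul F' F'))
                  (psmul (psadd (psscale ((k - 2) / k) F) (psC (-1))) F'))
           (psadd (psadd F (psscale (- ((k - 1) / k)) (psmul F F))) (psscale k psX))
       n = 0.
  move=> n.
  rewrite !psaddE !psscaleE.
  rewrite (psmul_ext n EF' EF') (psmul_ext n (fun i => erefl) EF').
  rewrite !(psmulDl, psmulDr, psmulZl, psmulZr, psmulCl, psmulCr).
  rewrite Rec [psmul Gs F n]psmulC.
  move: (psmul F F n) (psmul F Gs n) (psmul Gs Gs n) (F n) (psX n) kn0.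
  rewrite /k; move: (m'%:R : rat) => kk a b c d e kn.
  by field.
split => //.
move=> G D S S0 SS.
pose U := psadd G (psscale (-2) F').
have UU : forall n, psmul U U n = D n.
  move=> n; rewrite /U /D /G !psaddE !psscaleE.
  rewrite !(psmulDl, psmulDr, psmulZl, psmulZr, psmulCl, psmulCr).
  rewrite (psmul_ext n EF' EF') (psmul_ext n (fun i => erefl) EF').
  rewrite (psmul_ext n EF' (fun i => erefl)).
  rewrite !(psmulDl, psmulDr, psmulZl, psmulZr, psmulCl, psmulCr).
  rewrite [psmul Gs F n]psmulC !psaddE !psscaleE EF' !psaddE !psscaleE Rec [psmul Gs F n]psmulC.
  move: (psmul F F n) (psmul F Gs n) (psmul Gs Gs n) (F n) (psX n) (psC k n).
  rewrite /k; move: (m'%:R : rat) => kk a b c d e f.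
  ring.
have U0 : U 0%N = k.
  by rewrite /U /G /psadd /psscale /psC /F' /F /= !mulr0 !addr0.
have SU := ps_sqrt_uniq (S := S) (U := U) ltac:(by rewrite S0 U0) ltac:(by rewrite S0)
  (fun n => ltac:(by rewrite SS UU)).
move=> n; rewrite !psaddE !psscaleE SU /U psaddE psscaleE.
move: (G n) (F' n) => a b.
by field.
Qed.
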